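(* Let $n\ge4$ and $\sigma=(\sigma_1,\dots,\sigma_{n-2})\in\Sigma_n$. Then the alter ego $\underset{\sim}{\mathbf C}_n^{\sigma}=(C_n;\sigma_1,\dots,\sigma_{n-2},\mathscr T)$ yields a duality on $\mathcal G_n$, i.e. for every $\mathbf A\in\mathcal G_n$ the evaluation map $e_{\mathbf A}\colon\mathbf A\to E^\sigma D^\sigma(\mathbf A)$ is an isomorphism.
   Context: $\mathbf C_n$ is the Heyting algebra whose universe is the chain $\{0<1<\dots<n-1\}$, with lattice operations min and max, $\bot=0$, $\top=n-1$, and $a\to b=\top$ if $a\le b$, $a\to b=b$ if $b<a$. $\mathcal G_n$ is the class of algebras isomorphic to subalgebras of direct powers of $\mathbf C_n$; $\mathcal G_n(\mathbf A,\mathbf C_n)$ is the set of Heyting homomorphisms $\mathbf A\to\mathbf C_n$. For $n\ge4$: for $1\le i\le n-2$, $h_i$ is the endomorphism of $\mathbf C_n$ with $h_i(k)=k+1$ if $i\le k<n-1$ and $h_i(k)=k$ otherwise. For $1\le i\le n-3$, $g_i$ is the partial map with domain $C_n\setminus\{i\}$ given by $g_i(i+1)=i$ and $g_i(k)=k$ for $k\notin\{i,i+1\}$, and $f_i\colon C_n\setminus\{i+1\}\to C_n\setminus\{i\}$ is its inverse; these are partial endomorphisms (homomorphisms from a subalgebra of $\mathbf C_n$ into $\mathbf C_n$). $\Sigma_n=\{f_1,g_1\}\times\dots\times\{f_{n-3},g_{n-3}\}\times\{h_1,\dots,h_{n-2}\}$. Natural duality set-up: for an alter ego $(C_n;P,\mathscr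 T)$ with $P$ a set of total and partial endomorphisms and $\mathscr T$ discrete, powers carry the product topology and pointwise-lifted operations ($p^S(x)=p\circ x$, defined iff $x(s)\in\operatorname{dom}p$ for all $s$); a substructure is a subset closed under these (partial) operations wherever defined; $\mathcal X$ is the class of topological structures isomorphic to closed substructures of powers (empty one included), with morphisms the continuous maps $\varphi$ preserving total operations and such that, for partial $p$, $x\in\operatorname{dom}p^{\mathbf X}$ implies $\varphi(x)\in\operatorname{dom}p^{\mathbf Y}$ and $\varphi(p^{\mathbf X}(x))=p^{\mathbf Y}(\varphi(x))$. $D(\mathbf A)=\mathcal G_n(\mathbf A,\mathbf C_n)$ as a closed substructure of the power with exponent $A$; $E(\mathbf X)$ is the set of $\mathcal X$-morphisms from $\mathbf X$ to the alter ego, as a subalgebra of $\mathbf C_n^X$; $e_{\mathbf A}(a)(x)=x(a)$. $D^\sigma,E^\sigma$ denote these functors for the alter ego $\underset{\sim}{\mathbf C}_n^{\sigma}$. *)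

(* Defs.v *)
From mathcomp Require Import all_boot.
From Stdlib Require Import List.
Set Implicit Arguments. Unset Strict Implicit. Unset Printing Implicit Defensive.

(* The chain C_n: carrier {0,...,n-1} represented by naturals k < n.
   meet = min, join = max, bot = 0, top = n-1, Goedel implication. *)
Definition cbot : nat := 0.
Definition ctop (n : nat) : nat := n.-1.
Definition cimp (n a b : nat) : nat := if a <= b then ctop n else b.

(* Signature of Heyting algebras (no axioms needed: members of G_n are
   by definition (isomorphic to) subalgebras of powers of C_n). *)
Record HAlg := {
  carrier :> Type;
  hmeet : carrier -> carrier -> carrier;
  hjoin : carrier -> carrier -> carrier;
  himp  : carrier -> carrier -> carrier;
  hbot  : carrier;
  htop  : carrier }.

Definition is_hom (n : nat) (A : HAlg) (x : A -> nat) : Prop :=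
  [/\ (forall a, x a < n),
      (forall a b, x (hmeet a b) = minn (x a) (x b)),
      (forall a b, x (hjoin a b) = maxn (x a) (x b)),
      (forall a b, x (himp a b) = cimp n (x a) (x b)) &
      (x (hbot A) = cbot /\ x (htop A) = ctop n)].

Definition in_Gn (n : nat) (A : HAlg) : Prop :=
  exists (S : Type) (emb : A -> S -> nat),
    (forall a b, emb a = emb b -> a = b) /\
    (forall s, is_hom n (fun a => emb a s)).

Definition hmap (n i k : nat) : nat :=
  if (i <= k) && (k < n.-1) then k.+1 else k.

Definition gdom (i k : nat) : bool := k != i.
Definition gmap (i k : nat) : nat := if k == i.+1 then i else k.
Definition fdom (i k : nat) : bool := k != i.+1.
Definition fmap (i k : nat) : nat := if k == i then i.+1 else k.

(* An element sigma of Sigma_n is encoded by (c, j): for 1 <= i <= n-3,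
   sigma_i = f_i if c i = true and g_i if c i = false; sigma_{n-2} = h_j
   with 1 <= j <= n-2. *)
Definition pdom (c : nat -> bool) (i k : nat) : bool :=
  if c i then fdom i k else gdom i k.
Definition pmap (c : nat -> bool) (i k : nat) : nat :=
  if c i then fmap i k else gmap i k.

(* D^sigma(A) = G_n(A, C_n), as a subset of C_n^A. *)
Definition DA (n : nat) (A : HAlg) : (A -> nat) -> Prop := is_hom n (A := A).

(* phi : D^sigma(A) -> C_n is continuous (product topology on C_n^A with
   C_n discrete, subspace topology on D(A)): every point has a basic open
   neighbourhood (given by finitely many coordinates) on which phi is
   constant. *)
Definition continuous_on_D (n : nat) (A : HAlg) (phi : (A -> nat) -> nat) : Prop :=
  forall x, DA n x ->
    exists F : list A, forall y, DA n y ->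
      (forall a, In a F -> y a = x a) -> phi y = phi x.

(* phi is an X-morphism from D^sigma(A) to the alter ego C_n^sigma,
   i.e. an element of E^sigma D^sigma(A). *)
Definition alter_morphism (n : nat) (c : nat -> bool) (j : nat) (A : HAlg)
    (phi : (A -> nat) -> nat) : Prop :=
  [/\ (forall x, DA n x -> phi x < n),
      continuous_on_D n phi,
      (forall x, DA n x -> phi (hmap n j \o x) = hmap n j (phi x)) &
      (forall i, 1 <= i <= n - 3 -> forall x, DA n x ->
         (forall a, pdom c i (x a)) ->
         pdom c i (phi x) /\ phi (pmap c i \o x) = pmap c i (phi x))].

(* e_A : A -> C_n^{D(A)}, a |-> (x |-> x a), is a homomorphism into the
   pointwise power (restricted to D(A)). *)
Definition eval_is_hom (n : nat) (A : HAlg) : Prop :=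
  [/\ (forall (a b : A) x, DA n x -> x (hmeet a b) = minn (x a) (x b)),
      (forall (a b : A) x, DA n x -> x (hjoin a b) = maxn (x a) (x b)),
      (forall (a b : A) x, DA n x -> x (himp a b) = cimp n (x a) (x b)),
      (forall x, DA n x -> x (hbot A) = cbot) &
      (forall x, DA n x -> x (htop A) = ctop n)].

(* Main.v *)
Require Import Defs.
From Stdlib Require Import List ClassicalEpsilon FunctionalExtensionality.
From mathcomp Require Import all_boot zify.
From mathcomp Require all_classical topology nat_topology function_spaces discrete_topology.
From HB Require Import structures.
Set Implicit Arguments. Unset Strict Implicit. Unset Printing Implicit Defensive.

Module CptM.
Import all_classical topology nat_topology function_spaces discrete_topology.
Local Open Scope classical_set_scope.
HB.instance Definition _ (I : Type) := isPointed.Build {ptws {classic I} -> nat} (fun _ => 0%N).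

Lemma InP (T : eqType) (x : T) (s : seq.seq T) : In x s <-> x \in s.
Proof. elim: s => [|y s IH]; first by split.
have E : (x \in y :: s) = (x == y) || (x \in s) by rewrite inE.
rewrite E; split.
  by case=> [->|/IH ->]; rewrite ?eqxx ?orbT.
by case/orP => [/eqP ->|/IH]; [left|right].
Qed.

Lemma compactness_lemma (I : Type) (n : nat) (K : (I -> nat) -> Prop) :
  (forall z, K z -> forall i, (z i < n)%N) ->
  (forall z : I -> nat, (forall L : list I, exists k, K k /\ forall i, In i L -> k i = z i) -> K z) ->
  forall U : (I -> nat) -> list I,
  exists P : list (I -> nat), (forall k, In k P -> K k) /\
    forall z, K z -> exists k, In k P /\ forall i, In i (U k) -> z i = k i.
Proof.
move=> Kb Kc U.
pose J := {classic I}.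
pose X := {ptws J -> nat}.
have openS (L : list I) (z : X) :
  open [set g : X | forall i, In i L -> g i = z i].
  elim: L => [|i L IH].
    have -> : [set g : X | forall i, In i [::] -> g i = z i] = setT.
      by apply/seteqP; split => // g _ i [].
    exact: openT.
  have -> : [set g : X | forall i0, In i0 (i :: L) -> g i0 = z i0] =
     (proj (i : J)) @^-1` [set z i] `&` [set g : X | forall i, In i L -> g i = z i].
    apply/seteqP; split => g /=.
      by move=> H; split; [apply: H; left | move=> k kL; apply: H; right].
    by move=> [Hi HL] k [<-|kL]; [exact: Hi| exact: HL].
  apply: openI => //; apply: open_comp; last exact: discrete_open.
  move=> g _; exact: proj_continuous.
have boxc : compact [set f : X | forall i : J, `I_n (f i)].
  apply: (@tychonoff J (fun _ => nat) (fun _ => `I_n)) => i.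
  apply: finite_compact; exact: finite_II.
have Kcl : closed (K : set X).
  move=> z zcl; apply: Kc => L.
  have [k [Kk Sk]] := zcl [set g : X | forall i, In i L -> g i = z i]
     (open_nbhs_nbhs (conj (openS L z) (fun i _ => erefl))).
  by exists k.
have Kcpt : compact (K : set X).
  apply: (subclosed_compact Kcl boxc) => z Kz i; exact: Kb.
have := @compact_cover X. move=> E. move: Kcpt; rewrite E => /(_ X K (fun k : X => [set g : X | forall i, In i (U k) -> g i = k i])).
case.
- move=> k _; exact: openS.
- move=> z Kz; exists z => //.
move=> D' sD' cov.
exists (finmap.enum_fset D'); split.
  move=> k /InP kD; move: kD.
  by move/sD'; rewrite inE.
move=> z /cov [k kD' Sk]; exists k; split => //.
by apply/InP.
Qed.

End CptM.
Import CptM.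

Lemma hmap0 n j : 1 <= j -> hmap n j 0 = 0.
Proof. by rewrite /hmap; case: j => //= j _; rewrite leqn0 /=. Qed.
Lemma hmapT n j : hmap n j n.-1 = n.-1.
Proof. by rewrite /hmap ltnn andbF. Qed.
Lemma pmap0 c i : 1 <= i -> Defs.pmap c i 0 = 0.
Proof. by rewrite /Defs.pmap /fmap /gmap; case: (c i); case: i. Qed.
Lemma pmapT n c i : 1 <= i -> i <= n - 3 -> Defs.pmap c i n.-1 = n.-1.
Proof.
move=> h1 h2; rewrite /Defs.pmap /fmap /gmap; case: (c i).
  have -> : (n.-1 == i) = false by apply/eqP; lia. done.
have -> : (n.-1 == i.+1) = false by apply/eqP; lia. done.
Qed.
Lemma pdom0 c i : 1 <= i -> pdom c i 0.
Proof. by rewrite /pdom /fdom /gdom; case: (c i); case: i. Qed.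
Lemma pdomT n c i : 1 <= i -> i <= n - 3 -> pdom c i n.-1.
Proof.
move=> h1 h2; rewrite /pdom /fdom /gdom; case: (c i); apply/eqP; lia.
Qed.
Lemma pmap_inj c i u v : pdom c i u -> pdom c i v -> Defs.pmap c i u = Defs.pmap c i v -> u = v.
Proof.
rewrite /pdom /Defs.pmap /fdom /fmap /gdom /gmap; case: (c i) => /eqP hu /eqP hv;
case: eqP => eu; case: eqP => ev; lia.
Qed.
Lemma pmap_other c i u : u != i -> u != i.+1 -> Defs.pmap c i u = u.
Proof.
rewrite /Defs.pmap /fmap /gmap => /negbTE -> /negbTE ->; by case: (c i).
Qed.
Lemma pmap_fix c i u : pdom c i u -> Defs.pmap c i u = u -> u != i /\ u != i.+1.
Proof.
rewrite /pdom /Defs.pmap /fdom /fmap /gdom /gmap; case: (c i) => /eqP hu;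
case: eqP => e; move=> h; split; apply/eqP; lia.
Qed.

Section Config.
Variables (n : nat) (c : nat -> bool) (j K : nat).
Hypothesis n4 : 4 <= n.
Hypothesis hj : 1 <= j <= n - 2.
Hypothesis hK : K <= n - 2.
Variable Psi : (nat -> nat) -> nat.

Definition cfg s (m : nat -> nat) :=
  [/\ s <= K, (forall i, 1 <= i <= s -> 1 <= m i <= n - 2),
      (forall i, 1 <= i -> i < s -> m i < m i.+1) &
      (forall i, s < i <= K -> m i = n.-1)].
Definition valid m := exists s, cfg s m.
Definition rho (m : nat -> nat) r := if r == 0 then 0 else if r <= K then m r else n.-1.
Definition agree (m m' : nat -> nat) := forall i, 1 <= i <= K -> m i = m' i.
Definition avoid i (m : nat -> nat) := forall t, 1 <= t <= K -> pdom c i (m t).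

Hypothesis Hext : forall m m', agree m m' -> Psi m = Psi m'.
Hypothesis HH : forall m, valid m -> Psi (hmap n j \o m) = hmap n j (Psi m).
Hypothesis HP : forall i, 1 <= i <= n - 3 -> forall m, valid m -> avoid i m ->
   pdom c i (Psi m) /\ Psi (Defs.pmap c i \o m) = Defs.pmap c i (Psi m).
Hypothesis HB : forall m, valid m -> Psi m < n.

Definition good m r := Psi m = rho m r.

Lemma agree_sym m m' : agree m m' -> agree m' m.
Proof. by move=> h u hu; rewrite h. Qed.

Lemma good_agree m m' r : agree m m' -> good m r -> good m' r.
Proof.
move=> ha; rewrite /good (Hext ha) /rho => ->.
case: eqP => // r0; case: ifP => // hr; apply: ha; lia.
Qed.

Lemma good_h m r : valid m -> good m r -> good (hmap n j \o m) r.
Proof.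
move=> vm; rewrite /good HH // => ->; rewrite /rho.
case: eqP => _; first by rewrite hmap0 //; case/andP: hj.
by case: ifP => //= _; rewrite hmapT.
Qed.

Lemma good_p i m r : 1 <= i <= n - 3 -> valid m -> avoid i m ->
  good m r <-> good (Defs.pmap c i \o m) r.
Proof.
move=> /andP [i1 i2] vm am; rewrite /good.
have [dP ->] := HP (introT andP (conj i1 i2)) vm am.
have rhoE : rho (Defs.pmap c i \o m) r = Defs.pmap c i (rho m r).
  rewrite /rho; case: eqP => _; first by rewrite pmap0.
  by case: ifP => //= _; rewrite pmapT.
rewrite rhoE; split; first by move=> ->.
apply: pmap_inj => //; rewrite /rho; case: eqP => r0; first exact: pdom0.
case: ifP => hr; last exact: pdomT.
apply: am; lia.
Qed.


Lemma cfg_mono s m a b : cfg s m -> 1 <= a -> a < b -> b <= s -> m a < m b.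
Proof.
case=> _ _ hs _ a1; elim: b => // b IH ab bs.
rewrite ltnS in ab; case: (ltngtP a b) => [ab'|ba|eab]; first last.
- by subst b; apply: hs.
- lia.
- have := IH ab' (ltnW bs); have := hs b (leq_trans a1 (ltnW ab')) bs; lia.
Qed.

Lemma cfg_ge s m i : cfg s m -> 1 <= i <= s -> i <= m i.
Proof.
move=> cf; elim: i => // i IH /andP [_ hi].
case: i IH hi => [|i] IH hi.
  by case: cf => _ h _ _; have := h 1; lia.
have := IH (introT andP (conj (ltn0Sn i) (ltnW hi))).
have := cfg_mono cf (ltn0Sn i) (ltnSn i.+1) hi; lia.
Qed.

Lemma cfg_val s m u : cfg s m -> 1 <= u <= K ->
  (u <= s /\ 1 <= m u <= n - 2) \/ (s < u /\ m u = n.-1).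
Proof.
case=> sK h _ ht hu; case: (leqP u s) => us.
  by left; split => //; apply: h; lia.
by right; split => //; apply: ht; lia.
Qed.

Lemma cfg_valid s m : cfg s m -> valid m.
Proof. by exists s. Qed.

Lemma valid_of m : (forall t, 1 <= t <= K -> 1 <= m t <= n.-1) ->
  (forall t1 t2, 1 <= t1 -> t1 < t2 -> t2 <= K -> m t1 <= m t2 /\ (m t1 < m t2 \/ m t1 = n.-1)) ->
  valid m.
Proof.
move=> hb hm.
case: (boolP [exists t : 'I_K.+1, (1 <= t) && (m t == n.-1)]) => [ex|nex].
  have exP : exists t, (1 <= t <= K) && (m t == n.-1).
    case/existsP: ex => t /andP [t1 t2]; exists t; rewrite t1 t2 /= andbT; have := ltn_ord t; lia.
  case: (ex_minnP exP) => t0 /andP [/andP [t01 t02] /eqP mt0] tmin.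
  exists t0.-1; split; first lia.
  - move=> i /andP [i1 i2]; have := hb i; have : m i != n.-1.
      apply/negP => /eqP e; have := tmin i; rewrite e eqxx andbT; have -> : 1 <= i <= K by lia.
      move=> /(_ isT); lia.
    move=> /eqP; lia.
  - move=> i i1 i2; have := hm i i.+1 i1 (ltnSn i) ltac:(lia); have : m i != n.-1.
      apply/negP => /eqP e; have := tmin i; rewrite e eqxx andbT; have -> : 1 <= i <= K by lia.
      move=> /(_ isT); lia.
    move=> /eqP; lia.
  - move=> i /andP [i1 i2]; have := hb i ltac:(lia).
    case: (ltngtP t0 i) => h; try lia.
      by have := hm t0 i t01 h i2; lia.
    by subst i.
exists K; split => //.
- move=> i hi; have := hb i hi; have : m i != n.-1.
    apply/negP => /eqP e; move/negP: nex; apply; apply/existsP.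
    exists (Ordinal (n:=K.+1) (m:=i) ltac:(lia)); rewrite /= e eqxx andbT; lia.
  move=> /eqP; lia.
- move=> i i1 i2; have := hm i i.+1 i1 (ltnSn i) ltac:(lia); have : m i != n.-1.
    apply/negP => /eqP e; move/negP: nex; apply; apply/existsP.
    exists (Ordinal (n:=K.+1) (m:=i) ltac:(lia)); rewrite /= e eqxx andbT; lia.
  move=> /eqP; lia.
- lia.
Qed.

Definition B s := fun i => if i <= s then i else n.-1.

Lemma cfgB s : s <= K -> cfg s (B s).
Proof.
move=> sK; split => //.
- by move=> i /andP [i1 i2]; rewrite /B i2; lia.
- by move=> i i1 i2; rewrite /B (ltnW i2) i2.
- by move=> i /andP [i1 i2]; rewrite /B leqNgt i1.
Qed.

Fixpoint msum (m : nat -> nat) s := if s is s'.+1 then m s + msum m s' else 0.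

Lemma msum_dec m m' i s : (forall k, m k = m' k + (k == i)) -> 1 <= i <= s ->
  msum m s = (msum m' s).+1.
Proof.
move=> hk; elim: s => [|s IH] /andP [i1 i2]; first lia.
have same : forall s', s' < i -> msum m s' = msum m' s'.
  elim => //= s' IH' h; rewrite IH'; last lia.
  rewrite hk; have : (s'.+1 == i) = false by apply/eqP; lia. by move=> ->; lia.
rewrite /=; case: (ltngtP i s.+1) => [lt|gt|eq]; first last.
- by rewrite same ?eq ?eqxx ?hk //; lia.
- lia.
- rewrite IH; last lia. rewrite hk; have : (s.+1 == i) = false by apply/eqP; lia.
  by move=> ->; lia.
Qed.

Lemma slide_aux N r : forall s m, msum m s <= N -> cfg s m -> (good m r <-> good (B s) r).
Proof.
elim: N => [|N IH] s m hN cf.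
  case: s hN cf => [|s] hN cf.
    split; apply: good_agree => u /andP [u1 u2]; rewrite /B ifF; try lia;
     case: (cfg_val cf (introT andP (conj u1 u2))); lia.
  by case: cf => _ h _ _; have := h s.+1; simpl in hN; lia.
case: (boolP [exists k : 'I_s.+1, (1 <= k) && (m k != k)]) => [ex|nex]; last first.
  have allk : forall k, 1 <= k <= s -> m k = k.
    move=> k /andP [k1 k2]; apply/eqP; apply: contraR nex => hk.
    by apply/existsP; exists (Ordinal (n:=s.+1) (m:=k) (leq_trans k2 (leqnn _))); rewrite k1.
  have ag : agree (B s) m.
    move=> u /andP [u1 u2]; rewrite /B;
     case: (cfg_val cf (introT andP (conj u1 u2))) => [[us hu]|[us hu]].
    + by rewrite us allk //; lia.
    + by rewrite ifF //; lia.
  by split; apply: good_agree => // u hu; rewrite ag.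
have exP : exists k, (1 <= k <= s) && (m k != k).
  case/existsP: ex => k /andP [k1 k2]; exists k; rewrite k1 k2 /=; have := ltn_ord k; lia.
case: (ex_minnP exP) => i /andP [/andP [i1 i2] mi] imin.
have below : forall k, 1 <= k < i -> m k = k.
  move=> k /andP [k1 k2]; apply/eqP; case: eqP => // /eqP hk.
  have := imin k; rewrite k1 hk /= andbT; have -> : k <= s by lia.
  move=> /(_ isT); lia.
have mi_gt : i < m i by have := cfg_ge cf (introT andP (conj i1 i2)); move/eqP: mi; lia.
have mi_le : m i <= n - 2 by case: cf => _ h _ _; have := h i; lia.
have [t tE] : exists t, t = (m i).-1 by eexists.
pose m' := fun k => if k == i then t else m k.
have facts : forall u, 1 <= u <= K ->
   [/\ (u < i -> m u = u), (i < u -> u <= s -> m i < m u), (s < u -> m u = n.-1) & (u <= s -> 1 <= m u <= n - 2)].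
  move=> u hu; split.
  - by move=> ui; apply: below; lia.
  - by move=> iu us; apply: (cfg_mono cf) => //.
  - by move=> su; case: cf => _ _ _ h; apply: h; lia.
  - by move=> us; case: cf => _ h _ _; apply: h; lia.
have cf' : cfg s m'.
  case: cf => sK hb hs ht; split => //.
  - move=> u hu; rewrite /m'; case: eqP => [eu|_]; [lia|exact: hb].
  - move=> u u1 us; rewrite /m'; case: eqP => [eu|nu]; case: eqP => [eu'|nu'].
    + lia.
    + by subst u; have := hs i i1 us; lia.
    + have : u < i by lia. move=> ui; have := below u; lia.
    + exact: hs.
  - move=> u hu; rewrite /m'; case: eqP => [eu|_]; [lia|exact: ht].
have dec : msum m s = (msum m' s).+1.
  apply: (msum_dec (i:=i)) => [k|]; last lia.
  rewrite /m'; case: eqP => [->|_]; rewrite ?eqxx /=; lia.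
have IH' := IH s m' ltac:(lia) cf'.
have t1 : 1 <= t <= n - 3 by lia.
case ct: (c t).
- have av : avoid t m'.
    move=> u hu; rewrite /pdom ct /fdom /m'; case: (u =P i) => [_|nu]; first (apply/eqP; lia).
    have [f1 f2 f3 f4] := facts u hu; apply/eqP; case: (ltngtP u i) => [ui|iu|ui]; lia.
  rewrite -IH' (good_p _ t1 (cfg_valid cf') av); split; apply: good_agree => u hu;
    rewrite /= /Defs.pmap ct /fmap /m'; case: (u =P i) => [eu|nu]; rewrite ?eqxx;
    try (subst u; lia);
    have [f1 f2 f3 f4] := facts u hu; case: eqP => // e; exfalso;
    (case: (ltngtP u i) => [ui|iu|ui]; [lia| |lia]);
    (case: (leqP u s) => us; [have := f2 iu us | have := f3 us]; lia).
- have av : avoid t m.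
    move=> u hu; rewrite /pdom ct /gdom; apply/eqP.
    have [f1 f2 f3 f4] := facts u hu; case: (ltngtP u i) => [ui|iu|ui]; try subst u; lia.
  have ag : agree (Defs.pmap c t \o m) m'.
    move=> u hu; rewrite /= /Defs.pmap ct /gmap /m'; case: (u =P i) => [eu|nu].
      by subst u; rewrite ifT //; apply/eqP; lia.
    have [f1 f2 f3 f4] := facts u hu; case: eqP => // e; exfalso.
    case: (ltngtP u i) => [ui|iu|ui]; lia.
  rewrite (good_p _ t1 (cfg_valid cf) av) -IH'; split; apply: good_agree => // u hu.
  by rewrite ag.
Qed.

Lemma slide s m r : cfg s m -> (good m r <-> good (B s) r).
Proof. by move=> cf; apply: (@slide_aux (msum m s)). Qed.


Lemma down s r : 1 <= s <= K -> good (B s) r -> good (B s.-1) r.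
Proof.
move=> /andP [s1 sK] g.
pose C := fun i => if i < s then i else if i == s then n - 2 else n.-1.
have cC : cfg s C.
  split => //.
  - move=> i /andP [i1 i2]; rewrite /C; case: ifP => h; first lia.
    by rewrite ifT; [lia|apply/eqP; lia].
  - move=> i i1 i2; rewrite /C i2; case: ifP => h; first lia.
    by rewrite ifT; [lia|apply/eqP; lia].
  - move=> i /andP [i1 i2]; rewrite /C ifF; last lia.
    by rewrite ifF //; apply/eqP; lia.
have gC : good C r by apply/(slide r cC).
have gh := good_h (cfg_valid cC) gC.
have ch : cfg s.-1 (hmap n j \o C).
  case/andP: hj => j1 j2.
  split; first lia.
  - move=> i /andP [i1 i2]; rewrite /= /C ifT; last lia.
    by rewrite /hmap; case: ifP; lia.
  - move=> i i1 i2; rewrite /= /C ifT; last lia.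
    rewrite ifT; last lia.
    by rewrite /hmap; case: ifP; case: ifP; lia.
  - move=> i /andP [i1 i2]; rewrite /= /C.
    case: (ltnP i s) => h; first lia.
    case: eqP => e.
      rewrite /hmap; case: ifP => h'; first lia.
      by exfalso; move/negbT: h'; rewrite negb_and; case/orP; lia.
    exact: hmapT.
by apply/(slide r ch).
Qed.

Lemma all_B r : good (B K) r -> forall s, s <= K -> good (B s) r.
Proof.
move=> g s sK.
suff H : forall d, d <= K -> good (B (K - d)) r.
  by have := H (K - s) (leq_subr _ _); have -> : K - (K - s) = s by lia.
elim => [|d IH] hd; first by rewrite subn0.
have -> : K - d.+1 = (K - d).-1 by lia.
apply: down; last by apply: IH; lia.
lia.
Qed.

Lemma good_all r : good (B K) r -> forall m, valid m -> good m r.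
Proof.
move=> g m [s cf]; apply/(slide r cf); apply: all_B => //.
by case: cf.
Qed.

Lemma base_easy : Psi (B K) <= K \/ Psi (B K) = n.-1 -> exists r, r <= K.+1 /\ good (B K) r.
Proof.
set v := Psi (B K); case=> h.
  exists v; split; first lia.
  rewrite /good /rho -/v; case: eqP => // _; rewrite h /B h //.
exists K.+1; split => //.
rewrite /good /rho -/v ltnn h //.
Qed.

Lemma base : exists r, r <= K.+1 /\ good (B K) r.
Proof.
have cB := cfgB (leqnn K).
have vB := cfg_valid cB.
have hb := HB vB.
case: (ltngtP K (n - 3)) => hK3.
- case: (leqP (Psi (B K)) K) => vK; first by apply: base_easy; left.
  case: (Psi (B K) =P n.-1) => vt; first by apply: base_easy; right.
  exfalso; set v := Psi (B K) in hb vK vt.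
  have [i [i1 i2 vi]] : exists i, [/\ K < i, i <= n - 3 & (v == i) || (v == i.+1)].
    case: (leqP v (n - 3)) => h.
      by exists v; split => //; rewrite eqxx.
    by exists (n - 3); split; try lia; apply/orP; right; apply/eqP; lia.
  have av : avoid i (B K).
    move=> t /andP [t1 t2]; rewrite /pdom /fdom /gdom /B t2; case: (c i); apply/eqP; lia.
  have [dv pv] := HP (i:=i) ltac:(lia) vB av.
  have : Defs.pmap c i v = v.
    rewrite -pv; apply: Hext => t /andP [t1 t2]; rewrite /= /B t2 pmap_other //; apply/eqP; lia.
  move/(pmap_fix dv) => [/eqP h1 /eqP h2]; move: vi; case/orP => /eqP; lia.
- apply: base_easy; lia.
- pose e := if c 1 then 2 else 1.
  pose M := fun i => if i < e then i else if i <= K then i.+1 else n.-1.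
  have e12 : 1 <= e <= 2 by rewrite /e; case: (c 1).
  have cM : cfg K M.
    split => //.
    - by move=> i /andP [i1 i2]; rewrite /M; repeat (case: ifP => ?); lia.
    - by move=> i i1 i2; rewrite /M; repeat (case: ifP => ?); lia.
    - by move=> i /andP [i1 i2]; lia.
  have av : avoid 1 M.
    move=> t /andP [t1 t2]; rewrite /pdom /fdom /gdom /M /e; case: (c 1); rewrite ?t2; case: ifP; lia.
  have [dv _] := HP (i:=1) ltac:(lia) (cfg_valid cM) av.
  have hM := HB (cfg_valid cM).
  set v := Psi M in dv hM.
  have ve : v != e by move: dv; rewrite /pdom /fdom /gdom /e; case: (c 1).
  suff [r [rK gr]] : exists r, r <= K.+1 /\ good M r.
    by exists r; split => //; apply/(slide r cM).
  rewrite /good -/v /rho.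
  case: (v =P 0) => v0.
    by exists 0.
  case: (v =P n.-1) => vt.
    by exists K.+1; split => //; rewrite ltnn.
  exists (if v < e then v else v.-1); split; first by case: ifP; lia.
  by rewrite /M; case: (ltnP v e) => ?; repeat (case: ifP => ?); lia.
Qed.

Theorem config_thm : exists r, r <= K.+1 /\ forall m, valid m -> Psi m = rho m r.
Proof.
have [r [rK g]] := base; exists r; split => // m vm; exact: good_all.
Qed.

End Config.

Definition cb (P : Prop) : bool := if excluded_middle_informative P then true else false.
Lemma cbP (P : Prop) : reflect P (cb P).
Proof. by rewrite /cb; case: excluded_middle_informative => h; constructor. Qed.

Lemma minimizer (T : Type) (P : T -> Prop) (f : T -> nat) :
  (exists t, P t) -> exists t0, P t0 /\ forall t, P t -> f t0 <= f t.
Proof.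
move=> [t Pt].
have ex : exists k, cb (exists t, P t /\ f t = k) by exists (f t); apply/cbP; exists t.
case: (ex_minnP ex) => k /cbP [t0 [Pt0 ft0]] kmin.
exists t0; split => // t' Pt'; rewrite ft0; apply: kmin; apply/cbP; by exists t'.
Qed.

Lemma cimp_iff n u v : u < n -> v < n ->
  minn (cimp n u v) (cimp n v u) = if u == v then n.-1 else minn u v.
Proof.
move=> hu hv; rewrite /cimp /ctop; case: eqP => [->|ne]; first by rewrite leqnn minnn.
case: (leqP u v) => h1; case: (leqP v u) => h2; lia.
Qed.



Section Main.
Variables (n : nat) (c : nat -> bool) (j : nat) (A : HAlg).
Hypothesis n4 : 4 <= n.
Hypothesis hj : 1 <= j <= n - 2.

Notation D := (DA n (A:=A)).

Lemma hom_lt x : D x -> forall a, x a < n. Proof. by case. Qed.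
Lemma hom_bot x : D x -> x (hbot A) = 0. Proof. by case=> _ _ _ _ []. Qed.
Lemma hom_top x : D x -> x (htop A) = n.-1. Proof. by case=> _ _ _ _ []. Qed.
Lemma hom_meet x : D x -> forall a b, x (hmeet a b) = minn (x a) (x b). Proof. by case. Qed.
Lemma hom_join x : D x -> forall a b, x (hjoin a b) = maxn (x a) (x b). Proof. by case. Qed.
Lemma hom_imp x : D x -> forall a b, x (himp a b) = cimp n (x a) (x b). Proof. by case. Qed.

Lemma comp_hom x (r : nat -> nat) : D x ->
  r 0 = 0 -> r n.-1 = n.-1 -> (forall a, r (x a) < n) ->
  (forall a b, x a <= x b -> r (x a) <= r (x b)) ->
  (forall a b, x a < x b -> r (x a) < r (x b) \/ r (x a) = n.-1) ->
  D (r \o x).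
Proof.
move=> Dx r0 rt rb rm rs; have xb := hom_lt Dx.
split => //=.
- move=> a b /=; rewrite (hom_meet Dx); case: (leqP (x a) (x b)) => h.
    by apply/esym/minn_idPl/rm.
  by apply/esym/minn_idPr/rm/ltnW.
- move=> a b /=; rewrite (hom_join Dx); case: (leqP (x a) (x b)) => h.
    by apply/esym/maxn_idPr/rm.
  by apply/esym/maxn_idPl/rm/ltnW.
- move=> a b /=; rewrite (hom_imp Dx) /cimp; case: (leqP (x a) (x b)) => h.
    by rewrite (rm _ _ h) /ctop rt.
  have := rs _ _ h; have := rm _ _ (ltnW h); have := rb a; have := rb b.
  case: (leqP (r (x a)) (r (x b))) => h2 //; rewrite /ctop; lia.
- by rewrite /= (hom_bot Dx) (hom_top Dx) r0 rt.
Qed.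

Definition factors (w x : A -> nat) := forall b c, x b = x c -> w b = w c.

Lemma fact_le x w : D x -> D w -> factors w x -> forall b c, x b <= x c -> w b <= w c.
Proof.
move=> Dx Dw f b c' h.
have : w (himp b c') = w (htop A).
  apply: f; rewrite (hom_imp Dx) (hom_top Dx) /cimp h //.
rewrite (hom_imp Dw) (hom_top Dw) /cimp /ctop; case: leqP => // h2.
have := hom_lt Dw b; lia.
Qed.

Lemma fact_lt x w : D x -> D w -> factors w x -> forall b c, x b < x c -> w b < w c \/ w b = n.-1.
Proof.
move=> Dx Dw f b c' h.
have : w (himp c' b) = w b.
  apply: f; rewrite (hom_imp Dx) /cimp leqNgt h //.
rewrite (hom_imp Dw) /cimp /ctop; case: leqP => h2 h3; [right|left]; lia.
Qed.


Variable phi : (A -> nat) -> nat.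
Hypothesis Hphi : alter_morphism n c j phi.

Lemma phi_lt x : D x -> phi x < n. Proof. by case: Hphi => h _ _ _; apply: h. Qed.
Lemma phi_h x : D x -> phi (hmap n j \o x) = hmap n j (phi x).
Proof. by case: Hphi => _ _ h _; apply: h. Qed.
Lemma phi_p i x : 1 <= i <= n - 3 -> D x -> (forall a, pdom c i (x a)) ->
  pdom c i (phi x) /\ phi (Defs.pmap c i \o x) = Defs.pmap c i (phi x).
Proof. move=> hi Dx av; case: Hphi => _ _ _ h; exact: h. Qed.

Section Nat.
Variable x : A -> nat.
Hypothesis Dx : D x.

Definition inL u := cb (exists a, x a = u).
Definition lst := [seq u <- iota 1 (n - 2) | inL u].
Definition KK := size lst.
Definition wit (u : nat) : A :=
  match excluded_middle_informative (exists a, x a = u) with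
  | left H => proj1_sig (constructive_indefinite_description _ H)
  | right _ => hbot A end.

Lemma wit_spec u : (exists a, x a = u) -> x (wit u) = u.
Proof.
rewrite /wit; case: excluded_middle_informative => // H _.
by case: constructive_indefinite_description.
Qed.

Lemma mem_lst u : (u \in lst) = (1 <= u <= n - 2) && inL u.
Proof. by rewrite mem_filter mem_iota andbC; congr (_ && _); apply/idP/idP; lia. Qed.

Lemma lst_sorted : sorted ltn lst.
Proof. exact: (sorted_filter ltn_trans _ (iota_ltn_sorted _ _)). Qed.

Lemma lst_uniq : uniq lst.
Proof. exact/filter_uniq/iota_uniq. Qed.

Lemma KK_le : KK <= n - 2.
Proof. by rewrite /KK size_filter; apply: leq_trans (count_size _ _) _; rewrite size_iota. Qed.

Lemma mid_in a : 0 < x a < n.-1 -> x a \in lst.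
Proof.
move=> h; rewrite mem_lst; apply/andP; split; first lia.
by apply/cbP; exists a.
Qed.

Lemma nth_in t : t < KK -> nth 0 lst t \in lst.
Proof. exact: mem_nth. Qed.

Lemma nth_range t : t < KK -> 1 <= nth 0 lst t <= n - 2.
Proof. by move/nth_in; rewrite mem_lst => /andP []. Qed.

Lemma nth_wit t : t < KK -> x (wit (nth 0 lst t)) = nth 0 lst t.
Proof. by move/nth_in; rewrite mem_lst => /andP [_ /cbP h]; apply: wit_spec. Qed.

Lemma nth_mono t1 t2 : t1 < t2 -> t2 < KK -> nth 0 lst t1 < nth 0 lst t2.
Proof.
move=> h1 h2; rewrite /KK in h2; apply: (sorted_ltn_nth ltn_trans 0 lst_sorted) => //; rewrite inE; lia.
Qed.

Lemma index_mono u v : u \in lst -> v \in lst -> u < v -> index u lst < index v lst.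
Proof.
move=> hu hv uv; rewrite ltnNge; apply/negP => h.
move: h; rewrite leq_eqVlt => /orP [/eqP e|h].
  have : nth 0 lst (index v lst) = nth 0 lst (index u lst) by rewrite e.
  rewrite !nth_index // => e'; lia.
have := nth_mono h; rewrite /KK index_mem hu => /(_ isT); rewrite !nth_index //; lia.
Qed.

Definition rr (m : nat -> nat) u :=
  if u == 0 then 0 else if u == n.-1 then n.-1 else m (index u lst).+1.
Definition wm m := rr m \o x.

Lemma idx_range a : 0 < x a < n.-1 -> 1 <= (index (x a) lst).+1 <= KK.
Proof. by move/mid_in; rewrite -index_mem => h; apply/andP; split. Qed.

Lemma wm_hom m : valid n KK m -> D (wm m).
Proof.
move=> [s cf]; have hK := KK_le.
have vals : forall t, 1 <= t <= KK -> 1 <= m t <= n.-1.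
  move=> t ht; case: (cfg_val n4 hj hK cf ht); lia.
have mon : forall t1 t2, 1 <= t1 -> t1 < t2 -> t2 <= KK -> m t1 < m t2 \/ (m t1 = n.-1 /\ m t2 = n.-1).
  move=> t1 t2 h1 h2 h3.
  case: (cfg_val n4 hj hK cf (introT andP (conj (leq_trans h1 (ltnW h2)) h3))) => [[b1 b2]|[b1 b2]].
    case: (cfg_val n4 hj hK cf (introT andP (conj h1 (leq_trans (ltnW h2) h3)))) => [[a1 a2]|[a1 a2]]; last lia.
    by left; apply: (cfg_mono n4 hj hK cf).
  case: (cfg_val n4 hj hK cf (introT andP (conj h1 (leq_trans (ltnW h2) h3)))) => [[a1 a2]|[a1 a2]]; lia.
have xb := hom_lt Dx.
apply: (comp_hom Dx).
- by rewrite /rr eqxx.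
- by rewrite /rr ifF ?eqxx //; apply/eqP; lia.
- move=> a; rewrite /rr; case: eqP => h0; first lia.
  case: eqP => ht; first lia.
  have := vals _ (idx_range (a:=a) ltac:(have := xb a; lia)); lia.
- move=> a b h; rewrite /rr; case: (x a =P 0) => ha; first done.
  case: (x b =P 0) => hb; first lia.
  case: (x b =P n.-1) => hbt.
    case: (x a =P n.-1) => // hat; have := vals _ (idx_range (a:=a) ltac:(have := xb a; lia)); lia.
  case: (x a =P n.-1) => hat; first (have := xb b; lia).
  have ia := idx_range (a:=a) ltac:(have := xb a; lia).
  have ib := idx_range (a:=b) ltac:(have := xb b; lia).
  case: (ltngtP (x a) (x b)) h => // [lt|eq] _; last by rewrite eq.
  have := index_mono (mid_in (a:=a) ltac:(have := xb a; lia)) (mid_in (a:=b) ltac:(have := xb b; lia)) lt.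
  move=> il; have := mon (index (x a) lst).+1 (index (x b) lst).+1 ltac:(lia) ltac:(lia) ltac:(lia); lia.
- move=> a b h; rewrite /rr; case: (x a =P 0) => ha.
    case: (x b =P 0) => hb; first lia.
    case: (x b =P n.-1) => hbt; first (left; lia).
    have := vals _ (idx_range (a:=b) ltac:(have := xb b; lia)); lia.
  case: (x a =P n.-1) => hat; first by right.
  case: (x b =P 0) => hb; first lia.
  case: (x b =P n.-1) => hbt.
    have := vals _ (idx_range (a:=a) ltac:(have := xb a; lia)); lia.
  have ia := idx_range (a:=a) ltac:(have := xb a; lia).
  have ib := idx_range (a:=b) ltac:(have := xb b; lia).
  have := index_mono (mid_in (a:=a) ltac:(have := xb a; lia)) (mid_in (a:=b) ltac:(have := xb b; lia)) h.
  move=> il; case: (mon (index (x a) lst).+1 (index (x b) lst).+1) => //; lia.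
Qed.


Lemma natural : exists a, forall w, D w -> factors w x -> phi w = w a.
Proof.
have hK := KK_le.
have xb := hom_lt Dx.
pose Psi m := phi (wm m).
have Hext : forall m m', agree KK m m' -> Psi m = Psi m'.
  move=> m m' ag; rewrite /Psi; congr phi; apply: functional_extensionality => a.
  rewrite /wm /rr /=; case: eqP => // h0; case: eqP => // ht; apply: ag.
  apply: idx_range; have := xb a; lia.
have HH : forall m, valid n KK m -> Psi (hmap n j \o m) = hmap n j (Psi m).
  move=> m vm; rewrite /Psi -phi_h; last exact: wm_hom.
  congr phi; apply: functional_extensionality => a.
  rewrite /wm /rr /=; case: eqP => h0; first by rewrite hmap0 //; case/andP: hj.
  by case: eqP => ht //; rewrite hmapT.
have HP : forall i, 1 <= i <= n - 3 -> forall m, valid n KK m -> avoid c KK i m ->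
   pdom c i (Psi m) /\ Psi (Defs.pmap c i \o m) = Defs.pmap c i (Psi m).
  move=> i hi m vm av.
  have e : wm (Defs.pmap c i \o m) = Defs.pmap c i \o wm m.
    apply: functional_extensionality => a.
    rewrite /wm /rr /=; case: eqP => h0; first by rewrite pmap0 //; case/andP: hi.
    by case: eqP => ht //; rewrite pmapT //; case/andP: hi.
  rewrite /Psi e; apply: phi_p => //; first exact: wm_hom.
  move=> a; rewrite /wm /rr /=; case: eqP => h0; first by apply: pdom0; case/andP: hi.
  case: eqP => ht; first by apply: pdomT; case/andP: hi.
  apply: av; apply: idx_range; have := xb a; lia.
have HB : forall m, valid n KK m -> Psi m < n.
  by move=> m vm; apply: phi_lt; apply: wm_hom.
have [r [rK g]] := config_thm n4 hj hK Hext HH HP HB.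
have [a ha] : exists a, forall m, rho n KK m r = wm m a.
  case: (r =P 0) => r0.
    by exists (hbot A) => m; rewrite /rho /wm /rr /= r0 (hom_bot Dx).
  case: (leqP r KK) => rK'.
    exists (wit (nth 0 lst r.-1)) => m.
    have hr : r.-1 < KK by lia.
    rewrite /wm /rr /= nth_wit //; have := nth_range hr => hr'.
    rewrite ifF; last (apply/eqP; lia). rewrite ifF; last (apply/eqP; lia).
    rewrite index_uniq //; last exact: lst_uniq.
    by rewrite /rho; case: eqP => // _; rewrite rK' prednK //; lia.
  exists (htop A) => m; rewrite /rho /wm /rr /= (hom_top Dx) ifF; last (apply/eqP; lia).
  rewrite leqNgt rK' /= (_ : (n.-1 == 0) = false); last (apply/eqP; lia).
  by rewrite eqxx.
exists a => w Dw fw.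
pose mw t := w (wit (nth 0 lst t.-1)).
have wE : w = wm mw.
  apply: functional_extensionality => b; rewrite /wm /rr /=.
  case: eqP => h0.
    by rewrite -(hom_bot Dw); apply: fw; rewrite h0 (hom_bot Dx).
  case: eqP => ht.
    by rewrite -(hom_top Dw); apply: fw; rewrite ht (hom_top Dx).
  rewrite /mw /=; apply: fw; rewrite nth_wit.
    by rewrite nth_index //; apply: mid_in; have := xb b; lia.
  by rewrite /KK index_mem; apply: mid_in; have := xb b; lia.
have vw : valid n KK mw.
  apply: (valid_of n4 hj hK).
  - move=> t ht; rewrite /mw; have ht' : t.-1 < KK by lia.
    have := fact_lt Dx Dw fw (b := hbot A) (c := wit (nth 0 lst t.-1)).
    rewrite (hom_bot Dx) (hom_bot Dw) nth_wit //; have := nth_range ht'.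
    move=> hr /(_ ltac:(lia)); have := hom_lt Dw (wit (nth 0 lst t.-1)); lia.
  - move=> t1 t2 h1 h2 h3; rewrite /mw.
    have hlt : x (wit (nth 0 lst t1.-1)) < x (wit (nth 0 lst t2.-1)).
      rewrite !nth_wit; try lia; apply: nth_mono; lia.
    split; first exact: (fact_le Dx Dw fw (ltnW hlt)).
    exact: (fact_lt Dx Dw fw hlt).
by rewrite wE -ha -g.
Qed.

End Nat.


Definition iffe (a b : A) := hmeet (himp a b) (himp b a).
Lemma hom_iff x a b : D x -> x (iffe a b) = if x a == x b then n.-1 else minn (x a) (x b).
Proof.
move=> Dx; rewrite /iffe (hom_meet Dx) !(hom_imp Dx) cimp_iff //; exact: hom_lt.
Qed.

Lemma pair x y : D x -> D y -> exists a, phi x = x a /\ phi y = y a.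
Proof.
move=> Dx Dy.
have [a1 N1] := natural Dx; have [a2 N2] := natural Dy.
have fxx : forall z, factors z z by move=> z b c' ->.
have hx1 := N1 x Dx (fxx x); have hy2 := N2 y Dy (fxx y).
have xb := hom_lt Dx; have yb := hom_lt Dy.
have [q0 [yq0 q0min]] := @minimizer A (fun q => y q = n.-1) x (ex_intro _ (htop A) (hom_top Dy)).
pose e := iffe a1 a2.
have key : x q0 <= x e.
  case: (x q0 =P 0) => [->|cc0] //.
  have [cc ccE] : exists cc, x q0 = cc by eexists.
  pose coll u := if cc <= u then n.-1 else u.
  have Dz : D (coll \o x).
    apply: (comp_hom Dx).
    - by rewrite /coll ifF //; apply/negbTE; rewrite -ltnNge; lia.
    - by rewrite /coll; case: ifP.
    - by move=> a; rewrite /coll; case: ifP => _; [lia|exact: xb].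
    - by move=> a b h; rewrite /coll; have := xb a; have := xb b; case: ifP => ?; case: ifP => ?; lia.
    - by move=> a b h; rewrite /coll; have := xb a; have := xb b; case: ifP => ?; case: ifP => ?; lia.
  have fzx : factors (coll \o x) x by move=> b c' /= ->.
  have fzy : factors (coll \o x) y.
    move=> b c' h.
    have : y (iffe b c') = n.-1 by rewrite hom_iff // h eqxx.
    move/q0min; rewrite hom_iff // ccE /= /coll.
    have := xb b; have := xb c'.
    case: eqP => [->|ne] //; case: ifP => ?; case: ifP => ?; lia.
  have := N1 _ Dz fzx; have := N2 _ Dz fzy => ->.
  rewrite /= /coll /e hom_iff //; have := xb a1; have := xb a2; have := xb q0; rewrite ccE.
  case: eqP => [->|ne]; first lia.
  move=> h0 h1 h2; case: ifP => ?; case: ifP => ?; lia.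
pose p := himp q0 e.
exists (hjoin (hmeet a1 p) (hmeet a2 q0)).
rewrite (hom_join Dx) (hom_join Dy) !(hom_meet Dx) !(hom_meet Dy) !(hom_imp Dx) !(hom_imp Dy) hx1 hy2.
rewrite yq0 /cimp /ctop /e !hom_iff //.
have := xb a1; have := xb a2; have := yb a1; have := yb a2; have := xb q0.
move: key; rewrite /e hom_iff //.
case: (x a1 =P x a2) => hx; case: (y a1 =P y a2) => hy; move=> k *;
  repeat (case: ifP => ?); split; lia.
Qed.


Inductive inB (F : list A) : A -> Prop :=
| inB_base a : In a F -> inB F a
| inB_meet a b : inB F a -> inB F b -> inB F (hmeet a b)
| inB_join a b : inB F a -> inB F b -> inB F (hjoin a b).

Lemma inB_agree F x y b : D x -> D y -> (forall f, In f F -> x f = y f) -> inB F b -> x b = y b.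
Proof.
move=> Dx Dy ag; elim => [a /ag //|a b' _ IHa _ IHb|a b' _ IHa _ IHb].
  by rewrite (hom_meet Dx) (hom_meet Dy) IHa IHb.
by rewrite (hom_join Dx) (hom_join Dy) IHa IHb.
Qed.

Definition med (a b d : A) := hjoin (hjoin (hmeet a b) (hmeet b d)) (hmeet a d).

Lemma hom_med x a b d : D x -> x (med a b d) =
  maxn (maxn (minn (x a) (x b)) (minn (x b) (x d))) (minn (x a) (x d)).
Proof. by move=> Dx; rewrite /med !(hom_join Dx) !(hom_meet Dx). Qed.

Lemma interp F : (forall x y, D x -> D y -> exists a, In a F /\ phi x = x a /\ phi y = y a) ->
  forall Y : list (A -> nat), (forall x, In x Y -> D x) -> Y <> nil ->
  exists b, inB F b /\ forall x, In x Y -> phi x = x b.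
Proof.
move=> hpair Y.
suff : forall N, size Y <= N -> (forall x, In x Y -> D x) -> Y <> nil ->
  exists b, inB F b /\ forall x, In x Y -> phi x = x b by apply.
move=> N; elim: N Y => [|N IH] [|x1 [|x2 [|x3 r]]] //= hs hD _.
- have [a [aF [h1 _]]] := hpair x1 x1 (hD _ (or_introl erefl)) (hD _ (or_introl erefl)).
  by exists a; split; [exact: inB_base|move=> x [<-|[]]].
- have [a [aF [h1 h2]]] := hpair x1 x2 (hD _ (or_introl erefl)) (hD _ (or_intror (or_introl erefl))).
  by exists a; split; [exact: inB_base|move=> x [<-|[<-|[]]]].
- have sub : forall l, (forall x, In x l -> In x [:: x1, x2, x3 & r]) -> forall x, In x l -> D x.
    by move=> l hl x /hl; apply: hD.
  have [b1 [B1 h1]] := IH [:: x2, x3 & r] ltac:(simpl; lia) (sub [:: x2, x3 & r] (fun x h => or_intror h)) ltac:(discriminate).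
  have [b2 [B2 h2]] := IH [:: x1, x3 & r] ltac:(simpl; lia)
     (sub [:: x1, x3 & r] (fun x h => match h with or_introl e => or_introl e | or_intror h' => or_intror (or_intror h') end))
     ltac:(discriminate).
  have [b3 [B3 h3]] := IH [:: x1, x2 & r] ltac:(simpl; lia)
     (sub [:: x1, x2 & r] (fun x h => match h with or_introl e => or_introl e
          | or_intror (or_introl e) => or_intror (or_introl e)
          | or_intror (or_intror h') => or_intror (or_intror (or_intror h')) end))
     ltac:(discriminate).
  exists (med b1 b2 b3); split; first by apply: inB_join; apply: inB_meet || apply: inB_join; 
    try apply: inB_meet.
  move=> x hx; rewrite hom_med; last exact: hD.
  case: hx => [<-|[<-|[<-|hr]]].
  + have := h2 x1 ltac:(simpl; tauto); have := h3 x1 ltac:(simpl; tauto); lia.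
  + have := h1 x2 ltac:(simpl; tauto); have := h3 x2 ltac:(simpl; tauto); lia.
  + have := h1 x3 ltac:(simpl; tauto); have := h2 x3 ltac:(simpl; tauto); lia.
  + have := h1 x ltac:(simpl; tauto); have := h2 x ltac:(simpl; tauto); lia.
Qed.

Lemma D_closed z : (forall L : list A, exists k, D k /\ forall i, In i L -> k i = z i) -> D z.
Proof.
move=> h; split.
- move=> a; have [k [Dk hk]] := h [:: a]; rewrite -hk /=; [exact: hom_lt|tauto].
- move=> a b; have [k [Dk hk]] := h [:: hmeet a b; a; b].
  by rewrite -!hk /= ?(hom_meet Dk) //; tauto.
- move=> a b; have [k [Dk hk]] := h [:: hjoin a b; a; b].
  by rewrite -!hk /= ?(hom_join Dk) //; tauto.
- move=> a b; have [k [Dk hk]] := h [:: himp a b; a; b].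
  by rewrite -!hk /= ?(hom_imp Dk) //; tauto.
- have [k [Dk hk]] := h [:: hbot A; htop A].
  by rewrite -!hk /= ?(hom_bot Dk) ?(hom_top Dk) //; tauto.
Qed.

Definition Fx (x : A -> nat) : list A :=
  match excluded_middle_informative (D x) with
  | left H => match Hphi with And4 _ hc _ _ => proj1_sig (constructive_indefinite_description _ (hc x H)) end
  | right _ => nil end.

Lemma Fx_spec x : D x -> forall y, D y -> (forall a, In a (Fx x) -> y a = x a) -> phi y = phi x.
Proof.
move=> Dx; rewrite /Fx; case: excluded_middle_informative => // H.
case: Hphi => _ hc _ _. by case: constructive_indefinite_description.
Qed.

Definition pa (z : A + A -> nat) : A :=
  match excluded_middle_informative (D (fun a => z (inl a)) /\ D (fun a => z (inr a))) with
  | left H => proj1_sig (constructive_indefinite_description _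
         (pair (proj1 H) (proj2 H)))
  | right _ => hbot A end.

Lemma pa_spec z : D (fun a => z (inl a)) -> D (fun a => z (inr a)) ->
  phi (fun a => z (inl a)) = z (inl (pa z)) /\ phi (fun a => z (inr a)) = z (inr (pa z)).
Proof.
move=> h1 h2; rewrite /pa; case: excluded_middle_informative => [H|[]]; last by split.
by case: constructive_indefinite_description.
Qed.

Theorem main_dual : exists a, forall x, D x -> phi x = x a.
Proof.
have [P1 [P1D P1c]] := compactness_lemma (@hom_lt) D_closed Fx.
pose F0 := List.concat (List.map Fx P1).
have det : forall y y', D y -> D y' -> (forall a, In a F0 -> y a = y' a) -> phi y = phi y'.
  move=> y y' Dy Dy' ag; have [k [kP hk]] := P1c y Dy.
  have Dk := P1D k kP.
  rewrite (Fx_spec Dk Dy hk) (Fx_spec Dk Dy') // => a ha.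
  rewrite -ag; first exact: hk.
  apply/List.in_concat; exists (Fx k); split => //; apply/List.in_map_iff; by exists k.
pose K2 := fun z : A + A -> nat => D (fun a => z (inl a)) /\ D (fun a => z (inr a)).
have K2b : forall z, K2 z -> forall i, z i < n.
  by move=> z [h1 h2] [a|a]; [exact: (hom_lt h1) | exact: (hom_lt h2)].
have K2c : forall z : A + A -> nat, (forall L, exists k, K2 k /\ forall i, In i L -> k i = z i) -> K2 z.
  move=> z h; split; apply: D_closed => L.
  - have [k [[Dk1 Dk2] hk]] := h (List.map inl L); exists (fun a => k (inl a)); split => // i iL.
    by apply: hk; apply/List.in_map_iff; exists i.
  - have [k [[Dk1 Dk2] hk]] := h (List.map inr L); exists (fun a => k (inr a)); split => // i iL.
    by apply: hk; apply/List.in_map_iff; exists i.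
pose U2 := fun z : A + A -> nat =>
  List.map inl (Fx (fun a => z (inl a)) ++ [:: pa z]) ++ List.map inr (Fx (fun a => z (inr a)) ++ [:: pa z]).
have [P2 [P2K P2c]] := compactness_lemma K2b K2c U2.
pose F1 := List.map pa P2.
have pairs : forall x y, D x -> D y -> exists a, In a (F0 ++ F1) /\ phi x = x a /\ phi y = y a.
  move=> x y Dx Dy.
  pose z := fun s : A + A => match s with inl a => x a | inr a => y a end.
  have [k [kP hk]] := P2c z (conj Dx Dy).
  have [Dk1 Dk2] := P2K k kP.
  have [e1 e2] := pa_spec Dk1 Dk2.
  exists (pa k); split.
    apply/List.in_or_app; right; apply/List.in_map_iff; by exists k.
  have hkl : forall i, In i (Fx (fun a => k (inl a)) ++ [:: pa k]) -> x i = k (inl i).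
    move=> i hi; apply: (hk (inl i)); apply/List.in_or_app; left; apply/List.in_map_iff; by exists i.
  have hkr : forall i, In i (Fx (fun a => k (inr a)) ++ [:: pa k]) -> y i = k (inr i).
    move=> i hi; apply: (hk (inr i)); apply/List.in_or_app; right; apply/List.in_map_iff; by exists i.
  split.
  - rewrite (Fx_spec Dk1 Dx); last by move=> a ha; apply: hkl; apply/List.in_or_app; left.
    by rewrite e1 hkl //; apply/List.in_or_app; right; left.
  - rewrite (Fx_spec Dk2 Dy); last by move=> a ha; apply: hkr; apply/List.in_or_app; left.
    by rewrite e2 hkr //; apply/List.in_or_app; right; left.
pose F := F0 ++ F1.
have [P3 [P3D P3c]] := compactness_lemma (@hom_lt) D_closed (fun _ => F).
case: P3 P3D P3c => [|k0 P3] P3D P3c.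
  by exists (hbot A) => x Dx; have [k [[] _]] := P3c x Dx.
have [b [Bb hb]] := interp pairs P3D ltac:(discriminate).
exists b => x Dx.
have [k [kP hk]] := P3c x Dx.
have Dk := P3D k kP.
rewrite (det x k Dx Dk); last by move=> a ha; apply: hk; apply/List.in_or_app; left.
rewrite hb //; apply: (@inB_agree F k x b Dk Dx _ Bb) => f hf; by rewrite hk.
Qed.

End Main.

Theorem theorem3p3 (n : nat) (c : nat -> bool) (j : nat) (A : HAlg) :
  4 <= n -> 1 <= j <= n - 2 -> in_Gn n A ->
  [/\ eval_is_hom n A,
      (forall a, alter_morphism n c j (A := A) (fun x => x a)),
      (forall a b : A, (forall x, DA n x -> x a = x b) -> a = b) &
      (forall phi : (A -> nat) -> nat, alter_morphism (A := A) n c j phi ->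
         exists a : A, forall x, DA n x -> phi x = x a)].
Proof.
move=> n4 hj [S [emb [inj homs]]]; split.
- by split => [a b x []|a b x []|a b x []|x [] _ _ _ _ []|x [] _ _ _ _ []].
- move=> a; split.
  + by move=> x Dx; exact: hom_lt.
  + by move=> x Dx; exists [:: a] => y Dy h; apply: h; left.
  + by [].
  + by move=> i hi x Dx h; split.
- move=> a b h; apply: inj; apply: functional_extensionality => s.
  exact: (h (fun a => emb a s) (homs s)).
- move=> phi Hphi; exact: (main_dual n4 hj Hphi).
Qed.
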